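(* Let $X$ be a real Hilbert space and $h:\Phi_{lsc}^{\mathbb{R}}\to(-\infty,+\infty]$ a proper lower semicontinuous function bounded from below. Let $\gamma>0$ and let $(\phi_n)=((a_n,u_n))$ be generated by the $\Phi_{lsc}^{\mathbb{R}}$-proximal algorithm on $\Phi_{lsc}^{\mathbb{R}}$ described in the context. Then for every $n$ and every $\phi=(a,u)\in\Phi_{lsc}^{\mathbb{R}}$, $$h(\phi)-h(\phi_{n+1})\ge\frac{1}{2\gamma}\big[\|u-u_{n+1}\|^2-\|u-u_n\|^2\big]+\Big(1-\frac{2(a-a_{n+1})}{\gamma}\Big)\frac{\|u_n-u_{n+1}\|^2}{2\gamma}.$$ Moreover, if $\gamma\ge a_n-a_{n+1}$ for all $n\in\mathbb{N}$, then $(h(\phi_n))_{n\in\mathbb{N}}$ is non-increasing.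
   Context: $\Phi_{lsc}^{\mathbb{R}}=\{\phi=(a,u)\in\mathbb{R}\times X\}$ with $\phi(x)=-a\|x\|^2+\langle u,x\rangle$, identified with the Hilbert space $\mathbb{R}\times X$ (inner product $ab+\langle u,v\rangle$). The $X$-subdifferential of $h$ at $\psi$ is $\partial_Xh(\psi)=\{w\in X: h(\phi)-h(\psi)\ge\phi(w)-\psi(w)\ \forall\phi\in\Phi_{lsc}^{\mathbb{R}}\}$. Algorithm: choose $\gamma>0$, $\phi_0=(a_0,u_0)$. For $n\in\mathbb{N}$: find $\phi_{n+1}=(a_{n+1},u_{n+1})$ with $\frac{u_n-u_{n+1}}{\gamma}\in\partial_Xh(\phi_{n+1})$; if no such $\phi_{n+1}$ exists, return $\phi_n$. *)

(* Defs.v *)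
From HB Require Import structures.
From mathcomp Require Import all_boot all_order all_algebra.
From mathcomp Require Import all_classical all_reals all_analysis.
Set Implicit Arguments. Unset Strict Implicit. Unset Printing Implicit Defensive.
Import Order.TTheory GRing.Theory Num.Theory.
Import numFieldNormedType.Exports.
Local Open Scope classical_set_scope.
Local Open Scope ring_scope.

Definition hilbert_inner (R : realType) (X : normedModType R)
  (ip : X -> X -> R) : Prop :=
  [/\ forall x y, ip x y = ip y x,
      forall (k : R) x y z, ip (k *: x + y) z = k * ip x z + ip y z
    & forall x, ip x x = `|x| ^+ 2].

Definition phi_eval (R : realType) (X : normedModType R)
  (ip : X -> X -> R) (p : R * X) (x : X) : R :=
  - p.1 * `|x| ^+ 2 + ip p.2 x.

(* X-subdifferential of h at psi:
   { w | h(phi) - h(psi) >= phi(w) - psi(w) for all phi },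
   written additively to avoid +oo - +oo. *)
Definition Xsubdiff (R : realType) (X : normedModType R)
  (ip : X -> X -> R) (h : R * X -> \bar R) (psi : R * X) : set X :=
  [set w | forall phi : R * X,
     (h psi + (phi_eval ip phi w - phi_eval ip psi w)%:E <= h phi)%E].

Definition proper_fun (R : realType) (T : Type) (h : T -> \bar R) : Prop :=
  (forall t, h t != -oo)%E /\ (exists t, h t != +oo)%E.

Definition bounded_below (R : realType) (T : Type) (h : T -> \bar R) : Prop :=
  exists m : R, forall t, (m%:E <= h t)%E.

Definition prox_sequence (R : realType) (X : normedModType R)
  (ip : X -> X -> R) (h : R * X -> \bar R) (gamma : R) (phi0 : R * X)
  (phi : nat -> R * X) : Prop :=
  phi 0%N = phi0 /\
  forall n, Xsubdiff ip h (phi n.+1) (gamma^-1 *: ((phi n).2 - (phi n.+1).2)).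

(* Main.v *)
Require Import Defs.
From HB Require Import structures.
From mathcomp Require Import all_boot all_order all_algebra.
From mathcomp Require Import all_classical all_reals all_analysis.
Import Order.TTheory GRing.Theory Num.Theory.
Import numFieldNormedType.Exports.
Local Open Scope classical_set_scope.
Local Open Scope ring_scope.
From mathcomp Require Import ring lra.

Section Ip.
Variables (R : realType) (X : normedModType R) (ip : X -> X -> R).
Hypothesis H : hilbert_inner ip.

Lemma ipDl x y z : ip (x + y) z = ip x z + ip y z.
Proof. by case: H => _ L _; rewrite -(scale1r x) L mul1r scale1r. Qed.
Lemma ipZl k x z : ip (k *: x) z = k * ip x z.
Proof. case: H => _ L _; have := L k x 0 z; rewrite addr0 => ->.
have := L 1 0 0 z; rewrite scale1r addr0 mul1r => E.
have -> : ip 0 z = 0 by lra.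
by rewrite addr0. Qed.
Lemma ipBl x y z : ip (x - y) z = ip x z - ip y z.
Proof. by rewrite ipDl -scaleN1r ipZl mulN1r. Qed.
Lemma ipBr x y z : ip z (x - y) = ip z x - ip z y.
Proof. by case: H => S _ _; rewrite !(S z) ipBl. Qed.
Lemma ipZr k x z : ip z (k *: x) = k * ip z x.
Proof. by case: H => S _ _; rewrite !(S z) ipZl. Qed.
Lemma ipnn x : ip x x = `|x| ^+ 2.
Proof. by case: H. Qed.
Lemma norm_sub v d : `|v - d| ^+ 2 = `|v| ^+ 2 - 2 * ip v d + `|d| ^+ 2.
Proof.
case: H => S _ _.
by rewrite -!ipnn ipBl !ipBr (S d v); ring.
Qed.
End Ip.

Theorem proposition5 (R : realType) (X : completeNormedModType R)
  (ip : X -> X -> R) (h : R * X -> \bar R) (gamma : R) (phi0 : R * X)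
  (phi : nat -> R * X) :
  hilbert_inner ip ->
  proper_fun h -> lower_semicontinuous h -> bounded_below h ->
  0 < gamma ->
  prox_sequence ip h gamma phi0 phi ->
  (forall (n : nat) (p : R * X),
     (h (phi n.+1) +
      ((2 * gamma)^-1 * (`|p.2 - (phi n.+1).2| ^+ 2 - `|p.2 - (phi n).2| ^+ 2)
       + (1 - 2 * (p.1 - (phi n.+1).1) / gamma)
         * (`|(phi n).2 - (phi n.+1).2| ^+ 2 / (2 * gamma)))%:E
      <= h p)%E)
  /\ ((forall n : nat, (phi n).1 - (phi n.+1).1 <= gamma) ->
      forall n : nat, (h (phi n.+1) <= h (phi n))%E).
Proof.
move=> Hi _ _ _ g0 [_ Hs].
have key : forall (n : nat) (p : R * X),
     (h (phi n.+1) +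
      ((2 * gamma)^-1 * (`|p.2 - (phi n.+1).2| ^+ 2 - `|p.2 - (phi n).2| ^+ 2)
       + (1 - 2 * (p.1 - (phi n.+1).1) / gamma)
         * (`|(phi n).2 - (phi n.+1).2| ^+ 2 / (2 * gamma)))%:E
      <= h p)%E.
  move=> n [a u] /=.
  have := Hs n (a, u); rewrite /phi_eval /=.
  case: (phi n.+1) => a1 u1; case: (phi n) => a0 u0 /=.
  set d := u0 - u1 => Hx.
  set L := (X in (_ + X%:E)%E) in Hx.
  suff -> : (2 * gamma)^-1 * (`|u - u1| ^+ 2 - `|u - u0| ^+ 2) +
    (1 - 2 * (a - a1) / gamma) * (`|d| ^+ 2 / (2 * gamma)) = L by [].
  have -> : u - u0 = (u - u1) - d by rewrite /d opprB addrA subrK.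
  rewrite (@norm_sub _ _ _ Hi (u - u1) d) /L normrZ ger0_norm ?invr_ge0 ?ltW //.
  have -> : ip u (gamma^-1 *: d) = ip (u - u1) (gamma^-1 *: d) + ip u1 (gamma^-1 *: d)
    by rewrite (@ipBl _ _ _ Hi) subrK.
  rewrite (@ipZr _ _ _ Hi).
  by field; exact: lt0r_neq0.
split=> // Hg n.
apply: le_trans (key n (phi n)).
apply: leeDl; rewrite lee_fin subrr normr0 expr0n /= subr0.
have Ha := Hg n.
move: ((phi n).1 - (phi n.+1).1) Ha => c Ha.
have N0 : 0 <= `|(phi n).2 - (phi n.+1).2| ^+ 2 by rewrite sqr_ge0.
move: (`|(phi n).2 - (phi n.+1).2| ^+ 2) N0 => N N0.
have -> : (2 * gamma)^-1 * N + (1 - 2 * c / gamma) * (N / (2 * gamma))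
  = (N / (2 * gamma)) * (2 * (gamma - c) / gamma).
  by field; exact: lt0r_neq0.
apply: mulr_ge0; apply: divr_ge0 => //; try apply: mulr_ge0 => //; lra.
Qed.
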